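(* Let $a,b,c,y$ be real numbers with $c<b$, $0<b$, $y>0$ and $b<y^2<a$. Then \[ \int_{\sqrt{b}}^{y}\frac{\mathrm{d}u}{u\sqrt{(a-u^2)(u^2-b)(u^2-c)}} =\frac{1}{b}\sqrt{\frac{y^2-b}{(a-b)(b-c)}}\;\mathrm{F}_{D}^{(3)}\left(\tfrac12;1,\tfrac12,\tfrac12;\tfrac32;\ -\frac{y^2-b}{b},\,\frac{y^2-b}{a-b},\,-\frac{y^2-b}{b-c}\right). \]
   Context: For $n\ge1$, the Lauricella hypergeometric function of $n$ variables is \[ \mathrm{F}_{D}^{(n)}(a;b_1,\dots,b_n;c;x_1,\dots,x_n)=\sum_{m_1,\dots,m_n\ge0}\frac{(a)_{m_1+\cdots+m_n}(b_1)_{m_1}\cdots(b_n)_{m_n}}{(c)_{m_1+\cdots+m_n}\,m_1!\cdots m_n!}\,x_1^{m_1}\cdots x_n^{m_n},\qquad |x_i|<1, \] where $(\lambda)_m=\Gamma(\lambda+m)/\Gamma(\lambda)$ is the Pochhammer symbol; for $\operatorname{Re}c>\operatorname{Re}a>0$ it equals $\frac{\Gamma(c)}{\Gamma(a)\Gamma(c-a)}\int_0^1 u^{a-1}(1-u)^{c-a-1}\prod_{i=1}^n(1-x_iu)^{-b_i}\,\mathrm{d}u$, which gives its analytic continuation to $x_i\notin[1,\infty)$. *)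

(* Defs.v *)
From HB Require Import structures.
From mathcomp Require Import all_boot all_order all_algebra.
From mathcomp Require Import all_classical all_reals all_analysis.
Set Implicit Arguments. Unset Strict Implicit. Unset Printing Implicit Defensive.
Import Order.TTheory GRing.Theory Num.Theory.
Import numFieldNormedType.Exports.
Local Open Scope classical_set_scope.
Local Open Scope ring_scope.

(* Euler Beta function B(p,q) = int_0^1 u^(p-1) (1-u)^(q-1) du  (p, q > 0),
   so that Gamma(c)/(Gamma(a) Gamma(c-a)) = 1 / B(a, c-a). *)
Definition betaR (R : realType) (p q : R) : \bar R :=
  (\int[@lebesgue_measure R]_(u in `]0%R, 1%R[) (u `^ (p - 1) * (1 - u) `^ (q - 1))%:E)%E.

(* Lauricella F_D^(n)(a; b_1..b_n; c; x_1..x_n), for real parameters with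
   c > a > 0 and real x_i < 1, given by Euler's integral representation
   (the analytic continuation of the defining power series):
   Gamma(c)/(Gamma(a)Gamma(c-a)) int_0^1 u^(a-1) (1-u)^(c-a-1)
       prod_i (1 - x_i u)^(-b_i) du. *)
Definition lauricellaFD (R : realType) (n : nat) (a : R) (b : 'I_n -> R) (c : R)
    (x : 'I_n -> R) : \bar R :=
  ((\int[@lebesgue_measure R]_(u in `]0%R, 1%R[)
      (u `^ (a - 1) * (1 - u) `^ (c - a - 1)
       * \prod_(i < n) (1 - x i * u) `^ (- b i))%:E) / betaR a (c - a))%E.

(* Main.v *)
Require Import Defs.
From HB Require Import structures.
From mathcomp Require Import all_boot all_order all_algebra.
From mathcomp Require Import all_classical all_reals all_analysis.
From mathcomp Require Import ring lra measurable_realfun.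
Import Order.TTheory GRing.Theory Num.Theory.
Import numFieldNormedType.Exports.
Local Open Scope classical_set_scope.
Local Open Scope ring_scope.
Section ftc_oo.
Context {R : realType}.
Notation mu := (@lebesgue_measure R).

Lemma ge0_FTC_oo (f F : R -> R) (a b : R) : a < b ->
  {in `]a, b[, continuous f} -> {in `]a, b[, forall x, 0 <= f x} ->
  {in `]a, b[, forall x, derivable F x 1} -> {in `]a, b[, derive1 F =1 f} ->
  {for a, continuous F} -> {for b, continuous F} ->
  (\int[mu]_(x in `]a, b[) (f x)%:E = (F b - F a)%:E)%E.
Proof.
move=> ab cf f0 dF dFf cFa cFb.
pose e (n : nat) : R := (b - a) / 3 * harmonic n.
have ba0 : 0 < (b - a) / 3 by rewrite divr_gt0 // subr_gt0.
have e_gt0 n : 0 < e n by rewrite /e mulr_gt0 // harmonic_gt0.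
have e_le n : e n <= (b - a) / 3.
  rewrite /e ler_piMr ?(ltW ba0) //= invf_le1 ?ler1n ?ltr0n //.
have e_nd n m : (n <= m)%N -> e m <= e n.
  move=> nm; rewrite /e ler_wpM2l ?(ltW ba0) //=; set u := m.+1%:R; set v := n.+1%:R; have u0 : 0 < u by rewrite ltr0n. have v0 : 0 < v by rewrite ltr0n. have : v <= u by rewrite ler_nat. rewrite -(lef_pV2 u0 v0) //= .
have ecvg : e n @[n --> \oo] --> 0.
  rewrite (_ : 0 = (b - a) / 3 * 0); last by rewrite mulr0.
  apply: cvgMl_tmp; exact: cvg_harmonic.
pose an n := a + e n. pose bn n := b - e n.
have anbn n : an n < bn n.
  by have := e_le n; have := e_gt0 n; rewrite /an /bn; lra.
have aan n : a < an n by have := e_gt0 n; rewrite /an; lra.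
have bnb n : bn n < b by have := e_gt0 n; rewrite /bn; lra.
have sub n : `[an n, bn n] `<=` `]a, b[.
  move=> x /=; rewrite !in_itv /= => /andP[h1 h2].
  by rewrite (lt_le_trans (aan n) h1) (le_lt_trans h2 (bnb n)).
have mf : measurable_fun `]a, b[ f.
  apply: open_continuous_measurable_fun; first by apply: (@interval_open R).
  by move=> x /set_mem; apply: cf.
pose g (n : nat) := (EFin \o f) \_ `[an n, bn n].
have mg n : measurable_fun `]a, b[ (g n).
  apply/measurable_restrict => //.
  apply/measurable_EFinP; apply: (measurable_funS _ _ mf) => //.

have g0 n x : x \in `]a, b[ -> (0 <= g n x)%E.
  move=> xab; rewrite /g /patch; case: ifP => // _.
  by rewrite lee_fin f0.
have gnd x : x \in `]a, b[ -> {homo g^~ x : n m / (n <= m)%N >-> (n <= m)%E}.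
  move=> xab n m nm; rewrite /g /patch.
  case: ifPn => [|_]; last by case: ifP => // _; rewrite lee_fin f0.
  rewrite inE /= in_itv /= => /andP[h1 h2].
  rewrite ifT // inE /= in_itv /=.
  have h := e_nd _ _ nm; rewrite /an /bn in h1 h2 *.
  by apply/andP; split; lra.
have glim x : x \in `]a, b[ -> limn (g^~ x) = (f x)%:E.
  move=> xab; apply: lim_near_cst; first exact: ereal_hausdorff.
  have : 0 < Num.min (x - a) (b - x).
    by move: xab => /=; rewrite in_itv /= lt_min !subr_gt0.
  move=> hmin; have H := cvgr_lt 0 ecvg _ hmin.
  near=> n; have hn : e n < Num.min (x - a) (b - x) by near: n; exact: H.
  have hxa : e n < x - a by move: hn; rewrite lt_min => /andP[].
  have hbx : e n < b - x by move: hn; rewrite lt_min => /andP[].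
  rewrite /g /patch ifT // inE /= in_itv /= /an /bn.
  by apply/andP; split; lra.
have cbn : bn n @[n --> \oo] --> b.
  rewrite -[X in _ --> X]subr0; apply: cvgB => //; exact: cvg_cst.
have can : an n @[n --> \oo] --> a.
  rewrite -[X in _ --> X]addr0; apply: cvgD => //; exact: cvg_cst.
transitivity (\int[mu]_(x in `]a, b[) (fun x => limn (g^~ x)) x)%E.
  by apply: eq_integral => x xab; rewrite glim //; move: xab; rewrite inE.
rewrite (monotone_convergence mu _ mg g0 gnd) //.
rewrite (_ : (fun n => \int[mu]_(x in `]a, b[) g n x)%E =
     (fun n => (F (bn n) - F (an n))%:E)); last first.
  apply/funext => n.
  rewrite /g -integral_mkcondr setIidr; last exact: sub n.
  have dFn x : an n <= x <= bn n -> derivable F x 1.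
    move=> /andP[h1 h2]; apply: dF.
    by rewrite in_itv /= (lt_le_trans (aan n) h1) (le_lt_trans h2 (bnb n)).
  rewrite EFinB; apply: continuous_FTC2 (anbn n) _ _ _.
  - apply: (continuous_subspaceW (sub n)).
    by apply: continuous_in_subspaceT => x /set_mem; exact: cf.
  - split.
    + move=> x; rewrite in_itv /= => /andP[h1 h2]; apply: dFn.
      by rewrite (ltW h1) (ltW h2).
    + apply: cvg_at_right_filter.
      apply/differentiable_continuous; rewrite -derivable1_diffP; apply: dFn.
      by rewrite lexx (ltW (anbn n)).
    + apply: cvg_at_left_filter.
      apply/differentiable_continuous; rewrite -derivable1_diffP; apply: dFn.
      by rewrite lexx (ltW (anbn n)).
  - move=> x; rewrite in_itv /= => /andP[h1 h2]; apply: dFf.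
    by rewrite in_itv /= (lt_trans (aan n) h1) (lt_trans h2 (bnb n)).
apply: cvg_lim => //.
apply: cvg_EFin; first exact: nearW.
apply: cvgB.
- exact: (cvg_comp _ _ cbn cFb).
- exact: (cvg_comp _ _ can cFa).
Unshelve. all: by end_near.
Qed.
End ftc_oo.
Section B.
Context {R : realType}.
Notation mu := (@lebesgue_measure R).

Lemma sqrt_is_derive {x : R} : 0 < x -> is_derive x 1 (@Num.sqrt R) (2 * Num.sqrt x)^-1.
Proof. move=> x0; exact: is_derive1_sqrt. Qed.

Lemma der_of {f : R -> R} {x df : R} : is_derive x 1 f df -> derivable f x 1 /\ derive1 f x = df.
Proof. by move=> h; split; [exact: ex_derive | rewrite derive1E derive_val]. Qed.

Lemma is_derive_funext (f g : R -> R) (x df : R) : f = g -> is_derive x 1 g df -> is_derive x 1 f df.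
Proof. by move=> ->. Qed.

Lemma betaR_half : betaR (1 / 2 : R) (3 / 2 - 1 / 2) = 2%:E.
Proof.
rewrite /betaR.
have e1 : (1 / 2 - 1 : R) = - 2^-1 by lra.
have e2 : (3 / 2 - 1 / 2 - 1 : R) = 0 by lra.
rewrite e1 e2.
transitivity (\int[mu]_(u in `]0%R, 1%R[) ((Num.sqrt u)^-1)%:E)%E.
  apply: eq_integral => u; rewrite inE /= in_itv /= => /andP[u0 u1].
  by rewrite powRr0 mulr1 powRN powR12_sqrt // ltW.
rewrite (@ge0_FTC_oo R _ (fun x => 2 * Num.sqrt x)) //.
- by rewrite sqrtr1 sqrtr0 mulr1 mulr0 subr0.
- move=> u; rewrite in_itv /= => /andP[u0 u1].
  apply: continuousV; first by rewrite gt_eqF // sqrtr_gt0.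
  exact: sqrt_continuous.
- move=> u; rewrite in_itv /= => /andP[u0 u1].
  have h := is_deriveM (is_derive_cst (2:R) u 1) (sqrt_is_derive u0).
  have h' := @is_derive_funext (fun x => 2 * Num.sqrt x) _ _ _ ^~ h.
  by case: (der_of (h' (erefl _))).
- move=> u; rewrite in_itv /= => /andP[u0 u1].
  have h := is_deriveM (is_derive_cst (2:R) u 1) (sqrt_is_derive u0).
  have h' := @is_derive_funext (fun x => 2 * Num.sqrt x) _ _ _ ^~ h.
  case: (der_of (h' (erefl _))) => _ ->.
  rewrite /= scaler0 addr0.
  have -> : 2 *: (2 * Num.sqrt u)^-1 = 2 * (2 * Num.sqrt u)^-1 by [].
  by rewrite invfM mulrA mulfV ?mul1r.
- apply: cvgMl_tmp; exact: sqrt_continuous.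
- apply: cvgMl_tmp; exact: sqrt_continuous.
Qed.
End B.
Section C.
Context {R : realType}.
Notation mu := (@lebesgue_measure R).

Definition hh (p q r t : R) : R :=
  (1 + p * t)^-1 * (Num.sqrt (1 - q * t))^-1 * (Num.sqrt (1 + r * t))^-1.
Definition HH (p q r w : R) : R := 2 * hh p q r (w ^+ 2).
Definition PP (p q r w : R) : R := (\int[mu]_(t in `[-1, w]) HH p q r t)%R.

Lemma aff_cont (k : R) (t : R) : {for t, continuous (fun t : R => 1 + k * t)}.
Proof. apply: cvgD; first exact: cvg_cst. apply: cvgMl_tmp; exact: cvg_id. Qed.

Lemma hh_cont (p q r t : R) : 0 < 1 + p * t -> 0 < 1 - q * t -> 0 < 1 + r * t ->
  {for t, continuous (hh p q r)}.
Proof.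
move=> h1 h2 h3; rewrite /hh.
apply: cvgM; [apply: cvgM|].
- apply: cvgV; first by rewrite gt_eqF.
  exact: aff_cont.
- apply: cvgV; first by rewrite gt_eqF // sqrtr_gt0.
  apply: (continuous_comp (f := fun t => 1 - q * t)); last exact: sqrt_continuous.
  rewrite (_ : (fun t => 1 - q * t) = (fun t => 1 + (- q) * t)); last first.
    by apply/funext => z; rewrite mulNr.
  exact: aff_cont.
- apply: cvgV; first by rewrite gt_eqF // sqrtr_gt0.
  apply: (continuous_comp (f := fun t => 1 + r * t)); last exact: sqrt_continuous.
  exact: aff_cont.
Qed.

Lemma HH_cont (p q r w : R) : 0 <= p -> 0 <= r -> q * w ^+ 2 < 1 ->
  {for w, continuous (HH p q r)}.
Proof.
move=> p0 r0 hw.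
have w2 : 0 <= w ^+ 2 by rewrite sqr_ge0.
have hc : {for w ^+ 2, continuous (hh p q r)}.
  apply: hh_cont.
  - by rewrite ltr_wpDr // mulr_ge0.
  - by rewrite subr_gt0.
  - by rewrite ltr_wpDr // mulr_ge0.
have hc2 : {for w, continuous (hh p q r \o (fun w : R => w ^+ 2))}.
  apply: continuous_comp => //; exact: exprn_continuous.
exact: (cvgMl_tmp hc2).
Qed.

Lemma u0_exists q : 0 < q -> q < 1 -> exists u0 : R, 1 < u0 /\ q * u0 ^+ 2 < 1.
Proof.
move=> q0 q1.
have qi : 1 < q^-1 by rewrite invf_gt1.
pose m := Num.sqrt (q^-1).
have m0 : 0 <= m by rewrite sqrtr_ge0.
have hm : m ^+ 2 = q^-1 by rewrite sqr_sqrtr // ltW // invr_gt0.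
have hm' : q * m ^+ 2 = 1 by rewrite hm mulfV // gt_eqF.
have m1 : 1 < m by nra.
exists ((1 + m) / 2); split; first by lra.
nra.
Qed.

Lemma PP_der (p q r u0 w : R) : 0 <= p -> 0 <= r -> 0 < q -> 1 < u0 -> q * u0 ^+ 2 < 1 ->
  -1 < w -> w < u0 -> is_derive w 1 (PP p q r) (HH p q r w).
Proof.
move=> p0 r0 q0 u01 qu0 w1 wu.
have cH t : -1 <= t -> t <= u0 -> {for t, continuous (HH p q r)}.
  move=> t1 tu; apply: HH_cont => //.
  apply: le_lt_trans qu0; rewrite ler_pM2l //; nra.
have int : mu.-integrable `[-1, u0] (EFin \o HH p q r).
  apply: continuous_compact_integrable; first exact: segment_compact.
  apply: continuous_in_subspaceT => t /set_mem /=; rewrite in_itv /= => /andP[t1 tu].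
  exact: cH.
have [d e] := continuous_FTC1_closed wu int w1 (cH w (ltW w1) (ltW wu)).
by apply: DeriveDef; [exact: d | rewrite -derive1E; exact: e].
Qed.
End C.
Section D.
Context {R : realType}.
Notation mu := (@lebesgue_measure R).

Lemma is_derive_cont {f : R -> R} {x df : R} : is_derive x 1 f df -> {for x, continuous f}.
Proof.
move=> h; apply/differentiable_continuous/derivable1_diffP; exact: ex_derive.
Qed.

Lemma hh_ge0 (p q r t : R) : 0 <= 1 + p * t -> 0 <= hh p q r t.
Proof.
move=> h; rewrite /hh !mulr_ge0 // invr_ge0 // sqrtr_ge0.
Qed.

Lemma intA (p q r : R) : 0 <= p -> 0 < q -> q < 1 -> 0 <= r ->
  (\int[mu]_(u in `]0%R, 1%R[)
      (u `^ (1 / 2 - 1) * (1 - u) `^ (3 / 2 - 1 / 2 - 1)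
       * \prod_(i < 3) (1 - (fun i : 'I_3 => [:: - p; q; - r]`_i) i * u)
           `^ (- (fun i : 'I_3 => [:: 1; 1 / 2; 1 / 2]`_i) i))%:E
   = (PP p q r 1 - PP p q r 0)%:E)%E.
Proof.
move=> p0 q0 q1 r0.
have [u0 [u01 qu0]] := u0_exists q q0 q1.
have e1 : (1 / 2 - 1 : R) = - 2^-1 by lra.
have e2 : (3 / 2 - 1 / 2 - 1 : R) = 0 by lra.
transitivity (\int[mu]_(u in `]0%R, 1%R[) ((Num.sqrt u)^-1 * hh p q r u)%:E)%E.
  apply: eq_integral => u; rewrite inE /= in_itv /= => /andP[u0' u1].
  congr EFin.
  rewrite !big_ord_recr big_ord0 /= mul1r.
  have e1' : (2^-1 - 1 : R) = - 2^-1 by lra.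
  have e2' : (3 / 2 - 2^-1 - 1 : R) = 0 by lra.
  have pu : 0 <= 1 + p * u by rewrite addr_ge0 // mulr_ge0 // ltW.
  have qu : 0 <= 1 - q * u by rewrite subr_ge0; nra.
  have ru : 0 <= 1 + r * u by rewrite addr_ge0 // mulr_ge0 // ltW.
  rewrite e1' e2' powRr0 mulr1 !powRN !mulNr !opprK powRr1 // !powR12_sqrt //; last exact: ltW.
  by rewrite /hh mul1r; ring.
have su1 (t : R) : 0 <= t -> t <= 1 -> -1 < Num.sqrt t /\ Num.sqrt t < u0.
  move=> t0 t1; split; first by apply: lt_le_trans (sqrtr_ge0 t); lra.
  apply: le_lt_trans u01; rewrite -sqrtr1 ler_sqrt //; lra.
have cP (t : R) : 0 <= t -> t <= 1 -> {for Num.sqrt t, continuous (PP p q r)}.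
  move=> t0 t1; have [h1 h2] := su1 t t0 t1.
  exact: is_derive_cont ((@PP_der _ p q r u0 _ p0 r0 q0 u01 qu0 h1 h2)).
have dF (t : R) : 0 < t -> t < 1 -> is_derive t 1 (fun t => PP p q r (Num.sqrt t))
    (HH p q r (Num.sqrt t) * (2 * Num.sqrt t)^-1).
  move=> t0 t1; have [h1 h2] := su1 t (ltW t0) (ltW t1).
  apply: is_derive1_comp; last exact: sqrt_is_derive.
  exact: (@PP_der _ p q r u0 _ p0 r0 q0 u01 qu0 h1 h2).
rewrite (@ge0_FTC_oo R _ (fun t => PP p q r (Num.sqrt t))) //.
- by rewrite sqrtr1 sqrtr0.
- move=> u; rewrite in_itv /= => /andP[u0' u1].
  apply: cvgM.
    apply: cvgV; first by rewrite gt_eqF // sqrtr_gt0.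
    exact: sqrt_continuous.
  apply: hh_cont.
  + by rewrite ltr_wpDr // mulr_ge0 // ltW.
  + by rewrite subr_gt0; nra.
  + by rewrite ltr_wpDr // mulr_ge0 // ltW.
- move=> u; rewrite in_itv /= => /andP[u0' u1].
  apply: mulr_ge0; first by rewrite invr_ge0 sqrtr_ge0.
  by apply: hh_ge0; rewrite addr_ge0 // mulr_ge0 // ltW.
- move=> u; rewrite in_itv /= => /andP[u0' u1].
  by case: (dF u u0' u1).
- move=> u; rewrite in_itv /= => /andP[u0' u1].
  rewrite derive1E (@derive_val _ _ _ _ _ _ _ (dF u u0' u1)).
  have s0 : Num.sqrt u != 0 by rewrite gt_eqF // sqrtr_gt0.
  rewrite /HH sqr_sqrtr ?ltW //.
  by field.
- apply: continuous_comp; first exact: sqrt_continuous.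
  exact: cP.
- apply: continuous_comp; first exact: sqrt_continuous.
  exact: cP.
Qed.
End D.
Section E.
Context {R : realType}.

Lemma alg (a b c s u : R) : 0 < b -> 0 < s -> b < a -> c < b -> 0 < u ->
  b < u ^+ 2 -> u ^+ 2 - b < s -> s < a - b ->
  1 / b * Num.sqrt (s / ((a - b) * (b - c))) / 2 *
    (2 * hh (s / b) (s / (a - b)) (s / (b - c)) ((u ^+ 2 - b) / s) *
     ((2 * Num.sqrt ((u ^+ 2 - b) / s))^-1 * (2 * u / s)))
  = 1 / (u * Num.sqrt ((a - u ^+ 2) * (u ^+ 2 - b) * (u ^+ 2 - c))).
Proof.
move=> b0 s0 ba cb u0 bu us sa.
set t := (u ^+ 2 - b) / s.
have t0 : 0 < t by rewrite /t divr_gt0 // subr_gt0.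
have A0 : 0 < a - b by rewrite subr_gt0.
have C0 : 0 < b - c by rewrite subr_gt0.
have v0 : 0 < u ^+ 2 - b by rewrite subr_gt0.
have au : 0 < a - u ^+ 2 by lra.
have cu : 0 < u ^+ 2 - c by lra.
have qt : 0 < 1 - s / (a - b) * t.
  have -> : s / (a - b) * t = (u ^+ 2 - b) / (a - b).
    by rewrite /t; field; rewrite !gt_eqF.
  rewrite subr_gt0 ltr_pdivrMr // mul1r; lra.
have pt : 0 < 1 + s / b * t by rewrite ltr_wpDr // mulr_ge0 // ltW // divr_gt0.
have rt : 0 < 1 + s / (b - c) * t by rewrite ltr_wpDr // mulr_ge0 // ltW // divr_gt0.
have Q0 : 0 < (a - u ^+ 2) * (u ^+ 2 - b) * (u ^+ 2 - c) by rewrite !mulr_gt0.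
apply/eqP; rewrite -(@eqrXn2 _ 2) //; last first.
  by rewrite div1r invr_ge0 mulr_ge0 // ?sqrtr_ge0 // ltW.
  rewrite /hh !mulr_ge0 // ?invr_ge0 ?sqrtr_ge0 ?divr_ge0 // ?mulr_ge0 // ?ltW // ?invr_ge0 //.
apply/eqP.
rewrite /hh !(exprMn, exprVn) !sqr_sqrtr ?ltW // ?divr_ge0 ?mulr_ge0 // ?ltW //.
rewrite /t.
have u2 : 0 < b + (u ^+ 2 - b) by lra.
field.
  by rewrite (gt_eqF cu) (gt_eqF v0) (gt_eqF au) (gt_eqF u0) (gt_eqF s0) (gt_eqF C0) (gt_eqF A0) (gt_eqF b0) (gt_eqF u2).
by rewrite divr_gt0 // mulr_gt0.
Qed.

Notation mu := (@lebesgue_measure R).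

Lemma sq_cont (k x : R) : {for x, continuous (fun z : R => z ^+ 2 - k)}.
Proof. apply: cvgB; [exact: exprn_continuous | exact: cvg_cst]. Qed.

Lemma sq_cont' (k x : R) : {for x, continuous (fun z : R => k - z ^+ 2)}.
Proof. apply: cvgB; [exact: cvg_cst | exact: exprn_continuous]. Qed.

Lemma g_derive (b s u : R) : s != 0 ->
  is_derive u 1 (fun z : R => (z ^+ 2 - b) / s) (2 * u / s).
Proof.
move=> s0.
have h := is_deriveM (is_deriveB (is_deriveM (is_derive_id u (1:R)) (is_derive_id u (1:R)))
   (is_derive_cst b u (1:R))) (is_derive_cst s^-1 u (1:R)).
have h' := @is_derive_funext R (fun z : R => (z ^+ 2 - b) / s) _ _ _ erefl h.
apply: (is_derive_eq h').
have scE (x z : R) : x *: z = x * z by [].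
rewrite /= !scE mulr0 add0r subr0 mulr1; ring.
Qed.

Lemma intC (a b c y : R) : c < b -> 0 < b -> 0 < y -> b < y ^+ 2 -> y ^+ 2 < a ->
  (\int[mu]_(u in `]Num.sqrt b, y[)
      (1 / (u * Num.sqrt ((a - u ^+ 2) * (u ^+ 2 - b) * (u ^+ 2 - c))))%:E
   = (1 / b * Num.sqrt ((y ^+ 2 - b) / ((a - b) * (b - c))) / 2 *
      (PP ((y ^+ 2 - b) / b) ((y ^+ 2 - b) / (a - b)) ((y ^+ 2 - b) / (b - c)) 1
       - PP ((y ^+ 2 - b) / b) ((y ^+ 2 - b) / (a - b)) ((y ^+ 2 - b) / (b - c)) 0))%:E)%E.
Proof.
move=> cb b0 y0 hby ya.
set s := y ^+ 2 - b.
set p := s / b. set q := s / (a - b). set r := s / (b - c).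
set K := 1 / b * Num.sqrt (s / ((a - b) * (b - c))).
have s0 : 0 < s by rewrite subr_gt0.
have A0 : 0 < a - b by lra.
have C0 : 0 < b - c by lra.
have sa : s < a - b by rewrite /s; lra.
have p0 : 0 <= p by rewrite divr_ge0 // ltW.
have r0 : 0 <= r by rewrite divr_ge0 // ltW.
have q0 : 0 < q by rewrite divr_gt0.
have q1 : q < 1 by rewrite ltr_pdivrMr // mul1r.
have [u0 [u01 qu0]] := u0_exists q q0 q1.
have sb0 : 0 <= Num.sqrt b := sqrtr_ge0 b.
have sbb : Num.sqrt b ^+ 2 = b by rewrite sqr_sqrtr // ltW.
have sby : Num.sqrt b < y by rewrite ltNge; apply/negP => h; nra.
pose g (u : R) := (u ^+ 2 - b) / s.
have su (u : R) : Num.sqrt b < u -> u < y ->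
    [/\ 0 < u, b < u ^+ 2, u ^+ 2 - b < s & 0 < g u /\ g u < 1].
  move=> h1 h2.
  have u0' : 0 < u by lra.
  have bu : b < u ^+ 2 by nra.
  have us : u ^+ 2 - b < s by rewrite /s; nra.
  split => //; split; first by rewrite /g divr_gt0 // subr_gt0.
  by rewrite /g ltr_pdivrMr // mul1r.
have cP (w : R) : 0 <= w -> w <= 1 -> {for w, continuous (PP p q r)}.
  move=> w0 w1.
  have h1 : -1 < w by lra.
  have h2 : w < u0 by lra.
  exact: is_derive_cont (@PP_der _ p q r u0 w p0 r0 q0 u01 qu0 h1 h2).
have dF (u : R) : Num.sqrt b < u -> u < y ->
    is_derive u 1 (fun u => K / 2 * PP p q r (Num.sqrt (g u)))
      (K / 2 * (HH p q r (Num.sqrt (g u)) * ((2 * Num.sqrt (g u))^-1 * (2 * u / s)))).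
  move=> h1 h2; have [u0' bu us [g0 g1]] := su u h1 h2.
  have sn0 : s != 0 by rewrite gt_eqF.
  have dg := @g_derive b s u sn0.
  have dpsi := is_derive1_comp (@sqrt_is_derive R (g u) g0) dg.
  have w1 : -1 < Num.sqrt (g u) by apply: lt_le_trans (sqrtr_ge0 _); lra.
  have w2 : Num.sqrt (g u) < u0.
    apply: lt_trans u01; rewrite -sqrtr1 ltr_sqrt //; lra.
  have dP := @is_derive1_comp R (PP p q r) (Num.sqrt \o g) u _ _ (@PP_der _ p q r u0 _ p0 r0 q0 u01 qu0 w1 w2) dpsi.
  have h := is_deriveM (is_derive_cst (K / 2) u (1:R)) dP.
  have h' := @is_derive_funext R (fun u => K / 2 * PP p q r (Num.sqrt (g u))) _ _ _ erefl h.
  apply: (is_derive_eq h').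
  have scE (x z : R) : x *: z = x * z by [].
  by rewrite /= !scE mulr0 addr0.
have cF (x : R) : g x <= 1 ->
    {for x, continuous (fun u => K / 2 * PP p q r (Num.sqrt (g u)))}.
  move=> gx.
  have hg : {for x, continuous g} by apply: cvgM; [exact: sq_cont | exact: cvg_cst].
  have h1 : {for x, continuous (Num.sqrt \o g)} := continuous_comp hg (@sqrt_continuous R (g x)).
  have w1 : Num.sqrt (g x) <= 1.
    rewrite -sqrtr1 ler_sqrt //.
  have h2 : {for x, continuous (PP p q r \o (Num.sqrt \o g))}.
    exact: continuous_comp h1 (cP _ (sqrtr_ge0 _) w1).
  exact: (cvgMl_tmp h2).
rewrite (@ge0_FTC_oo R _ (fun u => K / 2 * PP p q r (Num.sqrt (g u)))) //.
- rewrite /g sbb subrr mul0r sqrtr0 -/s divff ?gt_eqF // sqrtr1.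
  by rewrite mulrBr.
- move=> u; rewrite in_itv /= => /andP[h1 h2].
  have [u0' bu us _] := su u h1 h2.
  have hQ : {for u, continuous (fun z : R => (a - z ^+ 2) * (z ^+ 2 - b) * (z ^+ 2 - c))}.
    apply: cvgM; [apply: cvgM|].
    + exact: sq_cont'.
    + exact: sq_cont.
    + exact: sq_cont.
  have hQ' := continuous_comp hQ (@sqrt_continuous R _).
  have hS : {for u, continuous (fun z : R => z * Num.sqrt ((a - z ^+ 2) * (z ^+ 2 - b) * (z ^+ 2 - c)))}.
    exact: (cvgM cvg_id hQ').
  have Q0 : 0 < (a - u ^+ 2) * (u ^+ 2 - b) * (u ^+ 2 - c).
    rewrite !mulr_gt0 // subr_gt0 //; lra.
  have hn : u * Num.sqrt ((a - u ^+ 2) * (u ^+ 2 - b) * (u ^+ 2 - c)) != 0.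
    by rewrite mulf_neq0 // gt_eqF // sqrtr_gt0.
  have hV := continuousV (s := fun z : R => z * Num.sqrt ((a - z ^+ 2) * (z ^+ 2 - b) * (z ^+ 2 - c))) (x := u) hn hS.
  exact: (cvgMl_tmp hV).
- move=> u; rewrite in_itv /= => /andP[h1 h2].
  have [u0' bu us _] := su u h1 h2.
  by rewrite div1r invr_ge0 mulr_ge0 // ?sqrtr_ge0 // ltW.
- move=> u; rewrite in_itv /= => /andP[h1 h2].
  by case: (dF u h1 h2).
- move=> u; rewrite in_itv /= => /andP[h1 h2].
  have [u0' bu us [g0 g1]] := su u h1 h2.
  rewrite derive1E (@derive_val _ _ _ _ _ _ _ (dF u h1 h2)).
  rewrite /HH sqr_sqrtr ?ltW // /g.
  by apply: alg => //; lra.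
- apply: cF; rewrite /g sbb subrr mul0r; lra.
- apply: cF; rewrite /g -/s divff ?gt_eqF //.
Qed.
End E.

Theorem mainTheorem4 (R : realType) (a b c y : R)
  (hcb : c < b) (hb : 0 < b) (hy : 0 < y) (hby : b < y ^+ 2) (hya : y ^+ 2 < a) :
  (\int[@lebesgue_measure R]_(u in `]Num.sqrt b, y[)
      (1 / (u * Num.sqrt ((a - u ^+ 2) * (u ^+ 2 - b) * (u ^+ 2 - c))))%:E
   = (1 / b * Num.sqrt ((y ^+ 2 - b) / ((a - b) * (b - c))))%:E
     * lauricellaFD (1 / 2)
         (fun i : 'I_3 => [:: 1; 1 / 2; 1 / 2]`_i) (3 / 2)
         (fun i : 'I_3 => [:: - ((y ^+ 2 - b) / b); (y ^+ 2 - b) / (a - b);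
                             - ((y ^+ 2 - b) / (b - c))]`_i))%E.
Proof.
rewrite intC //.
have s0 : 0 < y ^+ 2 - b by rewrite subr_gt0.
have A0 : 0 < a - b by lra.
have C0 : 0 < b - c by lra.
have p0 : 0 <= (y ^+ 2 - b) / b by rewrite divr_ge0 // ltW.
have r0 : 0 <= (y ^+ 2 - b) / (b - c) by rewrite divr_ge0 // ltW.
have q0 : 0 < (y ^+ 2 - b) / (a - b) by rewrite divr_gt0.
have q1 : (y ^+ 2 - b) / (a - b) < 1 by rewrite ltr_pdivrMr // mul1r; lra.
have hA := @intA R _ _ _ p0 q0 q1 r0.
rewrite /lauricellaFD hA betaR_half inver (negbTE (lt0r_neq0 (ltr0Sn _ _))).
rewrite -!EFinM; congr EFin.
ring.
Qed.
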